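(* Let $G$ be a finite group and $X$ a finite $G$-poset. For all $n\ge 1$ there is an isomorphism of posets $X^{(n)}/G\cong(X'/G)^{(n-1)}$. If $X$ satisfies property (B), then $X^{(n)}/G\cong(X/G)^{(n)}$ for all $n\ge 0$.
   Context: A finite $G$-poset is a finite poset with a right action of $G$ by order-preserving maps. For a poset $Y$, $Y'$ is the poset of non-empty chains of $Y$ ordered by inclusion (with the induced componentwise $G$-action), and $Y^{(n)}$ is the $n$-th iterated subdivision ($Y^{(0)}=Y$, $Y^{(n)}=(Y^{(n-1)})'$). For a $G$-poset $Y$, $Y/G$ is the orbit poset: $\overline{y}\le\overline{z}$ iff some representatives satisfy $y_1\le z_1$. $X$ satisfies property (B) if whenever $\{v_0,\dots,v_n\}$ and $\{v_0^{g_0},\dots,v_n^{g_n}\}$ are both chains of $X$ with $g_i\in G$, there is $g\in G$ with $v_i^{g_i}=v_i^g$ for all $i$. *)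

(* Defs.v *)
From mathcomp Require Import all_boot fingroup.
Set Implicit Arguments. Unset Strict Implicit. Unset Printing Implicit Defensive.

Record fposet := FPoset { pcar : finType; ple : rel pcar }.

Definition is_poset (P : fposet) : Prop :=
  [/\ reflexive (@ple P), antisymmetric (@ple P) & transitive (@ple P)].

Definition chainb (P : fposet) (c : {set pcar P}) : bool :=
  [forall x in c, forall y in c, ple x y || ple y x].

(* P' : the poset of non-empty chains ordered by inclusion *)
Definition sd_car (P : fposet) : finType :=
  {c : {set pcar P} | (c != set0) && chainb c}.
Definition sd (P : fposet) : fposet :=
  @FPoset (sd_car P) (fun c d => val c \subset val d).

Record gposet (gT : finGroupType) :=
  GPoset { gpos : fposet; gact : pcar gpos -> gT -> pcar gpos }.

Definition is_Gposet (gT : finGroupType) (X : gposet gT) : Prop :=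
  [/\ is_poset (gpos X),
      forall x, @gact gT X x 1%g = x,
      forall x g h, @gact gT X x (g * h)%g = @gact gT X (@gact gT X x g) h
    & forall x y g, ple x y -> ple (@gact gT X x g) (@gact gT X y g)].

(* The induced (componentwise) action on X': c^g = {x^g | x in c}.
   (insubd only serves to stay in the type of chains; for a G-poset the image
   of a non-empty chain is a non-empty chain, so insubd is the identity there.) *)
Definition gsd (gT : finGroupType) (X : gposet gT) : gposet gT :=
  @GPoset gT (sd (gpos X))
    (fun c g => insubd c [set @gact gT X x g | x in val c]).

Definition gorbit (gT : finGroupType) (X : gposet gT) (x : pcar (gpos X))
  : {set pcar (gpos X)} := [set @gact gT X x g | g : gT].
Definition orb_car (gT : finGroupType) (X : gposet gT) : finType :=
  {A : {set pcar (gpos X)} | [exists x, A == @gorbit gT X x]}.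
Definition quot (gT : finGroupType) (X : gposet gT) : fposet :=
  @FPoset (orb_car X)
    (fun A B => [exists y in val A, exists z in val B, ple y z]).

Definition poset_iso (P Q : fposet) : Prop :=
  exists f : pcar P -> pcar Q, bijective f /\ forall x y, ple x y = ple (f x) (f y).

Definition propB (gT : finGroupType) (X : gposet gT) : Prop :=
  forall (c : {set pcar (gpos X)}) (gs : pcar (gpos X) -> gT),
    chainb c -> chainb [set @gact gT X v (gs v) | v in c] ->
    exists g : gT, forall v, v \in c -> @gact gT X v (gs v) = @gact gT X v g.

(* Main.v *)
Require Import Defs.
From mathcomp Require Import all_boot fingroup.
Set Implicit Arguments. Unset Strict Implicit. Unset Printing Implicit Defensive.
Import GroupScope.

Definition act (gT : finGroupType) (X : gposet gT) := @gact gT X.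
Notation XT X := (pcar (gpos X)).

Lemma act1 gT (X : gposet gT) : is_Gposet X -> forall x : XT X, act x 1 = x.
Proof. by case. Qed.
Lemma actM gT (X : gposet gT) : is_Gposet X -> forall (x : XT X) g h, act x (g * h) = act (act x g) h.
Proof. by case. Qed.
Lemma actmono gT (X : gposet gT) : is_Gposet X -> forall (x y : XT X) g, ple x y -> ple (act x g) (act y g).
Proof. by case. Qed.
Lemma actK gT (X : gposet gT) : is_Gposet X -> forall (x : XT X) g, act (act x g) g^-1 = x.
Proof. by move=> H x g; rewrite -actM // mulgV act1. Qed.
Lemma actKV gT (X : gposet gT) : is_Gposet X -> forall (x : XT X) g, act (act x g^-1) g = x.
Proof. by move=> H x g; rewrite -actM // mulVg act1. Qed.
Lemma pref gT (X : gposet gT) : is_Gposet X -> reflexive (@ple (gpos X)).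
Proof. by case=> [[]]. Qed.
Lemma pasym gT (X : gposet gT) : is_Gposet X -> antisymmetric (@ple (gpos X)).
Proof. by case=> [[]]. Qed.
Lemma ptrans gT (X : gposet gT) : is_Gposet X -> transitive (@ple (gpos X)).
Proof. by case=> [[]]. Qed.
Lemma actple gT (X : gposet gT) : is_Gposet X -> forall (x y : XT X) g, ple (act x g) (act y g) = ple x y.
Proof.
move=> H x y g; apply/idP/idP; last exact: actmono.
by move=> /(actmono H g^-1); rewrite !actK.
Qed.

Lemma keyK gT (X : gposet gT) : is_Gposet X -> forall (z : XT X) h, ple z (act z h) -> act z h = z.
Proof.
move=> H z h zh.
have P : forall k, ple z (act z (h ^+ k)).
  elim=> [|k IH]; first by rewrite expg0 act1 // pref.
  rewrite expgS actM //; eapply (ptrans H); first exact IH.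
  by rewrite (actple H).
have := P (#[h]).-1; rewrite -(actple H _ _ h) -actM // -expgSr prednK ?order_gt0 //.
rewrite expg_order act1 // => hz.
by apply: (pasym H); rewrite hz.
Qed.

Lemma keyK' gT (X : gposet gT) : is_Gposet X -> forall (x : XT X) a b,
  ple (act x a) (act x b) || ple (act x b) (act x a) -> act x a = act x b.
Proof.
move=> H x a b /orP[] hab.
  have e : act x b = act (act x a) (a^-1 * b) by rewrite -actM // mulgA mulgV mul1g.
  by rewrite e (@keyK _ _ H (act x a) (a^-1 * b)) // -e.
have e : act x a = act (act x b) (b^-1 * a) by rewrite -actM // mulgA mulgV mul1g.
by rewrite e (@keyK _ _ H (act x b) (b^-1 * a)) // -e.
Qed.

Definition ob gT (X : gposet gT) (x : XT X) : orb_car X :=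
  @exist _ (fun A => [exists y, A == gorbit y]) (gorbit x)
    (introT existsP (ex_intro (fun y => gorbit x == gorbit y) x (eqxx _))).

Lemma gorbitP gT (X : gposet gT) (x y : XT X) :
  reflect (exists g, y = act x g) (y \in gorbit x).
Proof.
apply: (iffP imsetP) => [[g _ ->]|[g ->]]; first by exists g.
by exists g.
Qed.

Lemma gorbit_act gT (X : gposet gT) : is_Gposet X -> forall (x : XT X) g,
  gorbit (act x g) = gorbit x.
Proof.
move=> H x g; apply/setP => y; apply/gorbitP/gorbitP => [[h ->]|[h ->]].
  by exists (g * h); rewrite actM.
by exists (g^-1 * h); rewrite -actM // mulgA mulgV mul1g.
Qed.

Lemma ob_act gT (X : gposet gT) : is_Gposet X -> forall (x : XT X) g,
  ob (act x g) = ob x.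
Proof. by move=> H x g; apply: val_inj; rewrite /= gorbit_act. Qed.

Lemma obP gT (X : gposet gT) : is_Gposet X -> forall (x y : XT X),
  ob x = ob y <-> exists g, y = act x g.
Proof.
move=> H x y; split => [e|[g ->]]; last by rewrite ob_act.
have : y \in gorbit y by apply/gorbitP; exists 1; rewrite act1.
have -> : gorbit y = gorbit x by move: e => /(congr1 val) /= ->.
by move/gorbitP.
Qed.

Lemma ob_surj gT (X : gposet gT) (o : orb_car X) : exists x, o = ob x.
Proof.
case: o => A HA; case/existsP: (HA) => x /eqP e; exists x; apply: val_inj => /=; exact e.
Qed.

Lemma ple_ob gT (X : gposet gT) : is_Gposet X -> forall (x y : XT X),
  @ple (quot X) (ob x) (ob y) <-> exists g, ple (act x g) y.
Proof.
move=> H x y; split.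
  case/existsP => x1 /andP[/gorbitP[a ea]] /existsP[y1 /andP[/gorbitP[b eb]]].
  rewrite ea eb => hle.
  exists (a * b^-1); rewrite actM //.
  by rewrite -(actple H _ _ b) actKV.
case=> g hle; apply/existsP; exists (act x g); apply/andP; split.
  by apply/gorbitP; exists g.
apply/existsP; exists y; rewrite hle andbT; apply/gorbitP; exists 1; by rewrite act1.
Qed.

Lemma quot_trans gT (X : gposet gT) : is_Gposet X -> transitive (@ple (quot X)).
Proof.
move=> H B A C; case: (ob_surj A) => [x ->]; case: (ob_surj B) => [y ->];
  case: (ob_surj C) => [z ->].
move=> /(ple_ob H)[g hg] /(ple_ob H)[h hh]; apply/(ple_ob H); exists (g * h).
rewrite actM //; apply: (ptrans H) hh; by rewrite actple.
Qed.

Lemma quot_refl gT (X : gposet gT) : is_Gposet X -> reflexive (@ple (quot X)).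
Proof.
move=> H A; case: (ob_surj A) => [x ->]; apply/(ple_ob H); exists 1; by rewrite act1 // pref.
Qed.

Lemma chainbP (P : fposet) (c : {set pcar P}) :
  reflect (forall x y, x \in c -> y \in c -> ple x y || ple y x) (chainb c).
Proof.
apply: (iffP forall_inP) => [h x y xc yc|h x xc].
  by have /forall_inP := h x xc; apply.
by apply/forall_inP => y yc; apply: h.
Qed.

Lemma chainb_sub (P : fposet) (c d : {set pcar P}) : chainb c -> d \subset c -> chainb d.
Proof.
move=> /chainbP h /subsetP s; apply/chainbP => x y xd yd; apply: h; exact: s.
Qed.

Lemma img_chain gT (X : gposet gT) : is_Gposet X -> forall (C : XT (gsd X)) g,
  ([set act x g | x in val C] != set0) && chainb [set act x g | x in val C].
Proof.
move=> H C g; case/andP: (valP C) => ne ch; rewrite imset_eq0 ne /=.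
apply/chainbP => _ _ /imsetP[x xc ->] /imsetP[y yc ->].
by rewrite !(actple H); move/chainbP: ch; apply.
Qed.

Lemma val_gsd gT (X : gposet gT) : is_Gposet X -> forall (C : XT (gsd X)) g,
  val (act C g) = [set act x g | x in val C].
Proof.
move=> H C g; rewrite /act /= val_insubd.
by have := img_chain H C g; rewrite /act => ->.
Qed.

Lemma gsd_G gT (X : gposet gT) : is_Gposet X -> is_Gposet (gsd X).
Proof.
move=> H; split.
- split.
  + by move=> C; exact: subxx.
  + move=> C D /andP[cd dc]; apply: val_inj; apply/eqP; rewrite eqEsubset; exact/andP.
  + move=> D C E; exact: subset_trans.
- move=> C; apply: val_inj; rewrite (val_gsd H).
  by apply/setP => x; apply/imsetP/idP => [[y yc ->]|xc]; [rewrite act1 | exists x; rewrite ?act1].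
- move=> C g h; apply: val_inj; rewrite !(val_gsd H) -imset_comp.
  by apply: eq_imset => x /=; rewrite actM.
- move=> C D g; rewrite /= -!/(act _ _) !(val_gsd H); exact: imsetS.
Qed.

Lemma maxex (T : finType) (r : rel T) : transitive r -> forall S : {set T}, S != set0 ->
  (forall x y, x \in S -> y \in S -> r x y || r y x) ->
  exists2 m, m \in S & forall x, x \in S -> r x m.
Proof.
move=> tr S; move eq : #|S| => n; elim: n S eq => [|n IH] S eq.
  by move/eqP: eq; rewrite cards_eq0 => ->.
move=> _ tot; have : S != set0 by rewrite -card_gt0 eq.
case/set0Pn => x xS.
have [E|ne] := eqVneq (S :\ x) set0.
  exists x => // y yS; have : y \in S :\ x = false by rewrite E inE.
  rewrite !inE yS andbT => /negbFE/eqP ->; by have := tot x x xS xS; rewrite orbb.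
have [|||m' mS mmax] := IH (S :\ x).
- by move: eq; rewrite (cardsD1 x S) xS add1n => [[]].
- by [].
- by move=> a b /setD1P[_ aS] /setD1P[_ bS]; apply: tot.
have m'S : m' \in S by case/setD1P: mS.
case/orP: (tot x m' xS m'S) => hx.
  exists m' => // y yS; have [->//|yx] := eqVneq y x; apply: mmax; exact/setD1P.
exists x => // y yS; have [->|yx] := eqVneq y x; first by have := tot x x xS xS; rewrite orbb.
apply: tr hx; apply: mmax; exact/setD1P.
Qed.

Lemma gsd_B gT (X : gposet gT) : is_Gposet X -> propB (gsd X).
Proof.
move=> H c gs chc chi.
have [->|ne] := eqVneq c set0; first by exists 1 => v; rewrite inE.
have [|M Mc Mmax] := @maxex _ (@ple (gpos (gsd X))) (ptrans (gsd_G H)) c ne.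
  by move=> a b ac bc; move/chainbP: chc; apply.
exists (gs M) => C Cc; apply: val_inj; rewrite !(val_gsd H); apply: eq_in_imset => x xC.
have CM : val C \subset val M by exact: Mmax.
have xM : x \in val M by exact: (subsetP CM).
case/andP: (valP C) => _ /chainbP chC; case/andP: (valP M) => _ /chainbP chM.
apply: (keyK' H).
have : ple (act C (gs C)) (act M (gs M)) || ple (act M (gs M)) (act C (gs C)).
  by move/chainbP: chi; apply; apply/imsetP; [exists C | exists M].
rewrite /= !(val_gsd H) => /orP[] /subsetP sub.
  have /imsetP[y yM e] : act x (gs C) \in [set act x (gs M) | x in val M].
    by apply: sub; apply/imsetP; exists x.
  by rewrite e !(actple H) orbC; apply: chM.
have /imsetP[y yC e] : act x (gs M) \in [set act x (gs C) | x in val C].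
  by apply: sub; apply/imsetP; exists x.
by rewrite e !(actple H); apply: chC.
Qed.

Lemma bij_of (T T' : finType) (f : T -> T') :
  injective f -> (forall y, exists x, f x = y) -> bijective f.
Proof.
move=> inj surj; apply: inj_card_bij => //.
rewrite -(card_codom inj); apply: subset_leq_card; apply/subsetP => y _.
by case: (surj y) => x <-; exact: codom_f.
Qed.

Lemma surjF gT (Y : gposet gT) : is_Gposet Y -> forall (S : {set orb_car Y}),
  @chainb (quot Y) S -> exists C0 : {set XT Y}, chainb C0 && ([set ob x | x in C0] == S).
Proof.
move=> H S; move eq : #|S| => n; elim: n S eq => [|n IH] S eq chS.
  move/eqP: eq; rewrite cards_eq0 => /eqP ->; exists set0; rewrite imset0 eqxx andbT.
  by apply/chainbP => x y; rewrite inE.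
have neS : S != set0 by rewrite -card_gt0 eq.
have [|M MS Mmax] := @maxex _ (@ple (quot Y)) (quot_trans H) S neS.
  by move=> a b aS bS; move/chainbP: chS; apply.
have [||C0 /andP[chC0 /eqP eC0]] := IH (S :\ M).
- by move: eq; rewrite (cardsD1 M S) MS add1n => [[]].
- by apply: chainb_sub chS _; apply: subsetDl.
have [z' ez' z'max] : exists2 z' : XT Y, ob z' = M & forall b, b \in C0 -> ple b z'.
  case: (ob_surj M) => z ez.
  have [E|ne] := eqVneq C0 set0; first by exists z => // b; rewrite E inE.
  have [|m mC mmax] := @maxex _ (@ple (gpos Y)) (ptrans H) C0 ne.
    by move=> a b aS bS; move/chainbP: chC0; apply.
  have : @ple (quot Y) (ob m) M.
    apply: Mmax; have : ob m \in S :\ M by rewrite -eC0; apply/imsetP; exists m.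
    by case/setD1P.
  rewrite ez => /(ple_ob H)[g hg].
  exists (act z g^-1); first by rewrite ob_act.
  move=> b bC; apply: (ptrans H) (mmax b bC) _.
  by rewrite -(actple H _ _ g) actKV.
exists (z' |: C0); apply/andP; split.
  apply/chainbP => a b /setU1P[->|aC] /setU1P[->|bC].
  - by rewrite pref.
  - by rewrite z'max ?orbT.
  - by rewrite z'max.
  - by move/chainbP: chC0; apply.
by rewrite imsetU1 eC0 ez' setD1K.
Qed.

Definition FF gT (Y : gposet gT) (C : XT (gsd Y)) : {set orb_car Y} := [set ob x | x in val C].

Lemma FF_act gT (Y : gposet gT) : is_Gposet Y -> forall (C : XT (gsd Y)) g,
  FF (act C g) = FF C.
Proof.
move=> H C g; rewrite /FF (val_gsd H) -imset_comp; apply: eq_imset => x /=.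
exact: ob_act.
Qed.

Definition fo gT (Y : gposet gT) (A : orb_car (gsd Y)) : {set orb_car Y} :=
  \bigcup_(C in val A) FF C.

Lemma fo_ob gT (Y : gposet gT) : is_Gposet Y -> forall (C : XT (gsd Y)),
  fo (ob C) = FF C.
Proof.
move=> H C; apply/setP => o; apply/bigcupP/idP => [[D /gorbitP[g ->]]|oC].
  by rewrite (FF_act H).
by exists C => //; apply/gorbitP; exists 1; rewrite act1 //; exact: gsd_G.
Qed.

Lemma FF_chain gT (Y : gposet gT) : is_Gposet Y -> forall (C : XT (gsd Y)),
  (FF C != set0) && @chainb (quot Y) (FF C).
Proof.
move=> H C; case/andP: (valP C) => ne /chainbP ch; rewrite imset_eq0 ne /=.
apply/chainbP => _ _ /imsetP[x xC ->] /imsetP[y yC ->].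
case/orP: (ch x y xC yC) => h; apply/orP; [left|right]; apply/(ple_ob H); exists 1;
  by rewrite act1.
Qed.

Lemma foP gT (Y : gposet gT) : is_Gposet Y -> forall (A : orb_car (gsd Y)),
  (fo A != set0) && @chainb (quot Y) (fo A).
Proof.
move=> H A; case: (ob_surj A) => C ->; rewrite (fo_ob H); exact: FF_chain.
Qed.

Definition fmap gT (Y : gposet gT) (H : is_Gposet Y) (A : pcar (quot (gsd Y))) :
  pcar (sd (quot Y)) := Sub (fo A) (foP H A).

Lemma L1 gT (Y : gposet gT) : is_Gposet Y -> propB Y -> forall (C D : XT (gsd Y)),
  FF C \subset FF D -> exists g, val (act C g) \subset val D.
Proof.
move=> H HB C D /subsetP sub.
pose gs (x : XT Y) := odflt 1 [pick g | act x g \in val D].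
have gsP : forall x, x \in val C -> act x (gs x) \in val D.
  move=> x xC; have /imsetP[y yD e] : ob x \in FF D by apply: sub; apply/imsetP; exists x.
  case/(obP H): e => g eg.
  rewrite /gs; case: pickP => [h //|/(_ g)]; by rewrite -eg yD.
case/andP: (valP C) => _ chC; case/andP: (valP D) => _ chD.
have chI : chainb [set act x (gs x) | x in val C].
  apply: (chainb_sub chD); by apply/subsetP => _ /imsetP[x xC ->]; exact: gsP.
have [g hg] := HB (val C) gs chC chI.
exists g; rewrite (val_gsd H); apply/subsetP => _ /imsetP[x xC ->].
by have := gsP x xC; rewrite /act hg.
Qed.

Lemma core gT (Y : gposet gT) : is_Gposet Y -> propB Y ->
  poset_iso (quot (gsd Y)) (sd (quot Y)).
Proof.
move=> H HB; have HG := gsd_G H.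
exists (fmap H); split.
  apply: bij_of.
    move=> A B /(congr1 val) /=; case: (ob_surj A) => C ->; case: (ob_surj B) => D ->.
    rewrite !(fo_ob H) => e.
    have s1 : FF C \subset FF D by rewrite e.
    have s2 : FF D \subset FF C by rewrite e.
    have [g hg] := L1 H HB s1; have [g' hg'] := L1 H HB s2.
    apply/(obP HG); exists g; apply: val_inj; apply/eqP; rewrite eqEsubset.
    rewrite hg andbT; apply/subsetP => y yD; rewrite (val_gsd H).
    case/andP: (valP D) => _ /chainbP chD.
    have y1 : act y g' \in val C.
      by apply: (subsetP hg'); rewrite (val_gsd H); apply/imsetP; exists y.
    have y2 : act (act y g') g \in val D.
      by apply: (subsetP hg); rewrite (val_gsd H); apply/imsetP; exists (act y g').
    have := @keyK' _ _ H y 1 (g' * g); rewrite act1 // actM // => ->.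
      by apply/imsetP; exists (act y g').
    exact: chD.
  move=> S; case/andP: (valP S) => neS chS.
  have [C0 /andP[chC0 /eqP eC0]] := surjF H chS.
  have PC : (C0 != set0) && chainb C0.
    by rewrite chC0 andbT; move: neS; rewrite -eC0 imset_eq0.
  exists (ob (Sub C0 PC : XT (gsd Y))); apply: val_inj.
  by rewrite /= (fo_ob H) /FF SubK.
move=> A B; case: (ob_surj A) => C ->; case: (ob_surj B) => D ->.
rewrite [in RHS]/= !(fo_ob H); apply/idP/idP.
  case/(ple_ob HG) => g /= hg; rewrite -(FF_act H C g); exact: imsetS.
case/(L1 H HB) => g hg; apply/(ple_ob HG); exists g; exact: hg.
Qed.

Lemma iso_refl P : poset_iso P P.
Proof. by exists id; split => //; exists id. Qed.

Lemma iso_trans P Q R : poset_iso P Q -> poset_iso Q R -> poset_iso P R.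
Proof.
case=> f [bf hf] [g [bg hg]]; exists (g \o f); split; first exact: bij_comp.
by move=> x y; rewrite hf hg.
Qed.

Lemma sdmapP P Q (f : pcar P -> pcar Q) (hf : forall x y, ple x y = ple (f x) (f y))
  (c : pcar (sd P)) : (f @: val c != set0) && chainb (f @: val c).
Proof.
case/andP: (valP c) => ne /chainbP ch; rewrite imset_eq0 ne /=.
apply/chainbP => _ _ /imsetP[x xc ->] /imsetP[y yc ->]; rewrite -!hf; exact: ch.
Qed.

Definition sdmap P Q (f : pcar P -> pcar Q) (hf : forall x y, ple x y = ple (f x) (f y))
  (c : pcar (sd P)) : pcar (sd Q) := Sub (f @: val c) (sdmapP hf c).

Lemma iso_sd P Q : poset_iso P Q -> poset_iso (sd P) (sd Q).
Proof.
case=> f [[g fK gK] hf].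
have hg : forall x y, ple x y = ple (g x) (g y) by move=> x y; rewrite hf !gK.
have canc : forall (P Q : fposet) (f : pcar P -> pcar Q) (g : pcar Q -> pcar P) hf hg,
    cancel f g -> cancel (@sdmap P Q f hf) (@sdmap Q P g hg).
  move=> P0 Q0 f0 g0 hf0 hg0 K c; apply: val_inj; rewrite /sdmap !SubK -imset_comp.
  by rewrite (eq_imset _ K) imset_id.
exists (sdmap hf); split; first by exists (sdmap hg); apply: canc.
move=> c d; rewrite /=; apply/idP/idP; first exact: imsetS.
move/(imsetS g); rewrite -!imset_comp !(eq_imset _ fK) !imset_id //.
Qed.

Lemma iter_G gT (X : gposet gT) : is_Gposet X -> forall n, is_Gposet (iter n (@gsd gT) X).
Proof. by move=> H; elim=> [|n IH] //=; exact: gsd_G. Qed.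

Lemma iter_sd_iso P Q n : poset_iso P Q -> poset_iso (iter n sd P) (iter n sd Q).
Proof. by move=> h; elim: n => [|n IH] //=; exact: iso_sd. Qed.

Theorem corollary2p10 (gT : finGroupType) (X : gposet gT) :
  is_Gposet X ->
  (forall n : nat, 1 <= n ->
     poset_iso (quot (iter n (@gsd gT) X)) (iter n.-1 sd (quot (gsd X)))) /\
  (propB X -> forall n : nat,
     poset_iso (quot (iter n (@gsd gT) X)) (iter n sd (quot X))).
Proof.
move=> H.
have P1 : forall m, poset_iso (quot (gsd (iter m (@gsd gT) X))) (iter m sd (quot (gsd X))).
  elim=> [|m IH]; first exact: iso_refl.
  apply: iso_trans (iso_sd IH).
  rewrite [iter m.+1 _ _]/=; apply: core; first exact: gsd_G (iter_G H m).
  exact: gsd_B (iter_G H m).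
split; first by case=> [//|m] _; exact: P1.
move=> HB; case=> [|m]; first exact: iso_refl.
apply: iso_trans (P1 m) _; rewrite iterSr; apply: iter_sd_iso; exact: core.
Qed.
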